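(* Let $S$ be a distributive $\{\vee,0\}$-semilattice. Then the set of all elements $\varepsilon\in S$ such that $S$ satisfies $\mathrm{URP}_1$ at $\varepsilon$ is closed under the join operation.
   Context: A join-semilattice $S$ is distributive if whenever $c\leq a\vee b$ in $S$ there exist $a'\leq a$, $b'\leq b$ with $c=a'\vee b'$. Let $S$ be a $\{\vee,0\}$-semilattice and $\varepsilon\in S$. $S$ satisfies $\mathrm{URP}_1$ at $\varepsilon$ if for every family $((\alpha_i,\beta_i))_{i\in I}$ of elements of $S\times S$ with $\alpha_i\vee\beta_i=\varepsilon$ for all $i$, there exist a family $((\alpha_i^*,\beta_i^* ))_{i\in I}$ in $S\times S$ and a family $(\gamma_{i,j})_{(i,j)\in I\times I}$ in $S$ such that for all $i,j,k\in I$: (i) $\alpha_i^*\leq\alpha_i$, $\beta_i^*\leq\beta_i$, $\alpha_i^*\vee\beta_i^*=\varepsilon$; (ii) $\gamma_{i,j}\leq\alpha_i^*$ and $\gamma_{i,j}\leq\beta_j^*$; (iii) $\alpha_i^*\leq\alpha_j^*\vee\gamma_{i,j}$ and $\beta_j^*\leq\beta_i^*\vee\gamma_{i,j}$; (iv) $\gamma_{i,k}\leq\gamma_{i,j}\vee\gamma_{j,k}$. *)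

(* Defs.v *)
From HB Require Import structures.
From mathcomp Require Import all_boot all_order.
Set Implicit Arguments. Unset Strict Implicit. Unset Printing Implicit Defensive.
Import Order.LTheory.
Local Open Scope order_scope.

(* A {join,0}-semilattice is a [bJoinSemilatticeType d]; 0 is \bot. *)

Definition distributive_sl (d : Order.disp_t) (S : bJoinSemilatticeType d) : Prop :=
  forall a b c : S, c <= a `|` b ->
    exists a' b' : S, [/\ a' <= a, b' <= b & c = a' `|` b'].

Definition URP1 (d : Order.disp_t) (S : bJoinSemilatticeType d) (eps : S) : Prop :=
  forall (I : Type) (alpha beta : I -> S),
    (forall i, alpha i `|` beta i = eps) ->
    exists (alpha' beta' : I -> S) (gamma : I -> I -> S),
      forall i j k : I,
        [/\ (alpha' i <= alpha i /\ beta' i <= beta i /\ alpha' i `|` beta' i = eps),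
            (gamma i j <= alpha' i /\ gamma i j <= beta' j),
            (alpha' i <= alpha' j `|` gamma i j /\ beta' j <= beta' i `|` gamma i j)
          & gamma i k <= gamma i j `|` gamma j k].

(* Main.v *)
Require Import Defs.
From HB Require Import structures.
From mathcomp Require Import all_boot all_order.
From Stdlib Require Import ClassicalEpsilon.
Local Open Scope order_scope.
Import Order.LTheory.

Lemma split_fam (d : Order.disp_t) (S : bJoinSemilatticeType d) (I : Type)
  (alpha beta : I -> S) (e : S) :
  distributive_sl S -> (forall i, e <= alpha i `|` beta i) ->
  exists a b : I -> S, forall i, [/\ a i <= alpha i, b i <= beta i & e = a i `|` b i].
Proof.
move=> D H.
have F : forall i, {p : S * S | [/\ p.1 <= alpha i, p.2 <= beta i & e = p.1 `|` p.2]}.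
  move=> i; apply: constructive_indefinite_description.
  have [a' [b' [h1 h2 h3]]] := D _ _ _ (H i).
  by exists (a', b').
exists (fun i => (proj1_sig (F i)).1), (fun i => (proj1_sig (F i)).2) => i.
exact: (proj2_sig (F i)).
Qed.

Theorem proposition1p4 (d : Order.disp_t) (S : bJoinSemilatticeType d) :
  distributive_sl S ->
  forall e1 e2 : S, URP1 e1 -> URP1 e2 -> URP1 (e1 `|` e2).
Proof.
move=> D e1 e2 U1 U2 I alpha beta H.
have [a1 [b1 H1]] := @split_fam d S I alpha beta e1 D
  (fun i => ltac:(by rewrite H leUl)).
have [a2 [b2 H2]] := @split_fam d S I alpha beta e2 D
  (fun i => ltac:(by rewrite H leUr)).
have [a1' [b1' [g1 G1]]] := U1 I a1 b1 (fun i => ltac:(by case: (H1 i))).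
have [a2' [b2' [g2 G2]]] := U2 I a2 b2 (fun i => ltac:(by case: (H2 i))).
exists (fun i => a1' i `|` a2' i), (fun i => b1' i `|` b2' i),
  (fun i j => g1 i j `|` g2 i j) => i j k.
have [[A1 [B1 E1]] [C1 D1] [F1 K1] L1] := G1 i j k.
have [[A2 [B2 E2]] [C2 D2] [F2 K2] L2] := G2 i j k.
have [P1 Q1 _] := H1 i. have [P2 Q2 _] := H2 i.
split.
- split; [|split].
  + by rewrite leUx (le_trans A1 P1) (le_trans A2 P2).
  + by rewrite leUx (le_trans B1 Q1) (le_trans B2 Q2).
  + by rewrite joinACA E1 E2.
- split.
  + by rewrite leU2.
  + by rewrite leU2.
- split.
  + by rewrite -joinACA leU2.
  + by rewrite -joinACA leU2.
- by rewrite joinACA leU2.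
Qed.
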